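(* Let $(\mathcal{H},L)$ have the uniform convergence property with respect to $\mathcal{D}$, with uniform convergence function $f$, let $\varepsilon>0$, $\alpha>0$, and assume $\Pr[\widehat{\Theta}_S^\varepsilon\neq\varnothing]>0$. (i) If the risk minimizer $\theta_0\in\arg\min_\Theta R$ exists, then $(\mathcal{H},L)$ is valid at level $\alpha$ and tolerance $\varepsilon$ whenever $m\ge f(\varepsilon/2,\alpha)$. (ii) If the risk minimizer does not exist, then $(\mathcal{H},L)$ is valid at level $\alpha$ and tolerance $\varepsilon$ whenever $m\ge\inf_{0<\delta<\varepsilon}f((\varepsilon-\delta)/2,\alpha)$.
   Context: Setting: data are i.i.d. from a distribution $\mathcal{D}$ on $\mathcal{X}\times\mathcal{Y}$; $\mathcal{H}=\{x\mapsto h(x;\theta)\mid\theta\in\Theta\}$ with $\Theta$ a topological space, $L:\mathcal{Y}\times\mathcal{Y}\to\mathbb{R}$ a loss; risk $R(\theta)=\mathbb{E}_{\mathcal{D}}[L(h(X;\theta),Y)]$ (finite), empirical risk $\widehat{R}_S(\theta)=\frac1m\sum_{i=1}^mL(h(X_i;\theta),Y_i)$ for $S\sim\mathcal{D}^m$. All events are assumed measurable. Uniform convergence property: there is $w:\mathbb{R}^+\times\mathbb{R}^+\to\mathbb{R}$ (a ''witness'') such that for all $\varepsilon,\alpha>0$ and integers $m\ge w(\varepsilon,\alpha)$, $\Pr_{S\sim\mathcal{D}^m}[\sup_{\theta}|R(\theta)-\widehat{R}_S(\theta)|\le\varepsilon]\ge1-\alpha$; the uniform convergence function is $f(\varepsilon,\alpha)=\inf_{w}\lceil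 w(\varepsilon,\alpha)\rceil$ over all witnesses $w$. $\widehat{\Theta}_S^\varepsilon=\{\theta\mid\widehat{R}_S(\theta)\le\inf_\vartheta\widehat{R}_S(\vartheta)+\varepsilon\}$, $\Theta_0^\delta=\{\theta\mid R(\theta)\le\inf_\vartheta R(\vartheta)+\delta\}$. The $\varepsilon$-plausibility of a Borel set $A\subseteq\Theta$ is $\mathrm{pl}_\varepsilon(A)=\Pr_{S\sim\mathcal{D}^m}[\widehat{\Theta}_S^\varepsilon\cap A\ne\varnothing\mid\widehat{\Theta}_S^\varepsilon\ne\varnothing]$. Validity: at a fixed sample size $m$, $(\mathcal{H},L)$ is valid at level $\alpha$ and tolerance $\varepsilon$ if for every Borel set $A\subseteq\Theta$ for which there exists $\delta\ge0$ with $\Theta_0^\delta\subseteq A$ and $\Theta_0^\delta\neq\varnothing$, one has $\mathrm{pl}_\varepsilon(A)\ge1-\alpha$. *)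

(* Defs.v *)
From mathcomp Require Import all_boot all_order all_algebra.
From mathcomp Require Import all_classical all_reals all_analysis.
Import Order.TTheory GRing.Theory Num.Theory.

Set Implicit Arguments.
Unset Strict Implicit.
Unset Printing Implicit Defensive.

Local Open Scope classical_set_scope.
Local Open Scope ring_scope.

(* Setting: data z = (x, y) in X * Y drawn from D; hypothesis h : X -> Theta -> Y
   (h x theta = h(x; theta)); loss L : Y -> Y -> R. *)

Definition lossAt (X Y Th : Type) (R : realType)
  (h : X -> Th -> Y) (L : Y -> Y -> R) (th : Th) (z : X * Y) : R :=
  L (h z.1 th) z.2.

(* Risk R(theta) = E_D[L(h(X;theta),Y)] (real-valued; finiteness is a hypothesis). *)
Definition risk (dX dY : measure_display) (X : measurableType dX)
  (Y : measurableType dY) (Th : Type) (R : realType)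
  (D : probability (X * Y)%type R) (h : X -> Th -> Y) (L : Y -> Y -> R)
  (th : Th) : R :=
  Rintegral D setT (lossAt h L th).

Definition emp_risk (X Y Th : Type) (R : realType) (m : nat)
  (h : X -> Th -> Y) (L : Y -> Y -> R) (S : m.-tuple (X * Y)) (th : Th) : R :=
  (m%:R)^-1 * \sum_(i < m) lossAt h L th (tnth S i).

Definition emp_argmin (X Y Th : Type) (R : realType) (m : nat)
  (h : X -> Th -> Y) (L : Y -> Y -> R) (S : m.-tuple (X * Y)) (eps : R)
  : set Th :=
  [set th | ((emp_risk h L S th)%:E <=
             ereal_inf (range (fun t => (emp_risk h L S t)%:E)) + eps%:E)%E].

Definition risk_argmin (Th : Type) (R : realType) (Rk : Th -> R) (d : R)
  : set Th :=
  [set th | ((Rk th)%:E <= ereal_inf (range (fun t => (Rk t)%:E)) + d%:E)%E].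

Definition unif_dev (X Y Th : Type) (R : realType) (m : nat)
  (h : X -> Th -> Y) (L : Y -> Y -> R) (Rk : Th -> R) (S : m.-tuple (X * Y))
  : \bar R :=
  ereal_sup (range (fun th => (`|Rk th - emp_risk h L S th|)%:E)).

(* P m is (a version of) the product probability D^m on samples of size m:
   it agrees with prod_i D(A_i) on all measurable rectangles (which
   determines it uniquely on the product sigma-algebra). *)
Definition is_product_prob (dX dY : measure_display) (X : measurableType dX)
  (Y : measurableType dY) (R : realType) (D : probability (X * Y)%type R)
  (m : nat) (Pm : probability (m.-tuple (X * Y)%type) R) : Prop :=
  forall A : 'I_m -> set (X * Y),
    (forall i, measurable (A i)) ->
    Pm [set S | forall i, A i (tnth S i)] = (\prod_(i < m) D (A i))%E.

Definition Pr (d : measure_display) (T : measurableType d) (R : realType)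
  (P : probability T R) (E : set T) : R := fine (P E).

Definition uc_witness (dX dY : measure_display) (X : measurableType dX)
  (Y : measurableType dY) (Th : Type) (R : realType)
  (P : forall m : nat, probability (m.-tuple (X * Y)%type) R)
  (h : X -> Th -> Y) (L : Y -> Y -> R) (Rk : Th -> R) (w : R -> R -> R) : Prop :=
  forall eps alpha : R, 0 < eps -> 0 < alpha ->
  forall m : nat, (0 < m)%N -> w eps alpha <= m%:R ->
    1 - alpha <= Pr (P m) [set S | (unif_dev h L Rk S <= eps%:E)%E].

Definition uniform_convergence (dX dY : measure_display) (X : measurableType dX)
  (Y : measurableType dY) (Th : Type) (R : realType)
  (P : forall m : nat, probability (m.-tuple (X * Y)%type) R)
  (h : X -> Th -> Y) (L : Y -> Y -> R) (Rk : Th -> R) : Prop :=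
  exists w, uc_witness P h L Rk w.

Definition uc_function (dX dY : measure_display) (X : measurableType dX)
  (Y : measurableType dY) (Th : Type) (R : realType)
  (P : forall m : nat, probability (m.-tuple (X * Y)%type) R)
  (h : X -> Th -> Y) (L : Y -> Y -> R) (Rk : Th -> R) (eps alpha : R) : \bar R :=
  ereal_inf [set ((Num.ceil (w eps alpha))%:~R)%:E
            | w in [set w | uc_witness P h L Rk w]].

Definition Borel (Th : topologicalType) (A : set Th) : Prop :=
  <<s (@open Th) >> A.

Definition plausibility (dX dY : measure_display) (X : measurableType dX)
  (Y : measurableType dY) (Th : Type) (R : realType) (m : nat)
  (Pm : probability (m.-tuple (X * Y)%type) R)
  (h : X -> Th -> Y) (L : Y -> Y -> R) (eps : R) (A : set Th) : R :=
  Pr Pm [set S | emp_argmin h L S eps `&` A !=set0 /\ emp_argmin h L S eps !=set0]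
  / Pr Pm [set S | emp_argmin h L S eps !=set0].

Definition valid (dX dY : measure_display) (X : measurableType dX)
  (Y : measurableType dY) (Th : topologicalType) (R : realType) (m : nat)
  (Pm : probability (m.-tuple (X * Y)%type) R)
  (h : X -> Th -> Y) (L : Y -> Y -> R) (Rk : Th -> R) (alpha eps : R) : Prop :=
  forall A : set Th, Borel A ->
    (exists d : R, 0 <= d /\ risk_argmin Rk d `<=` A /\ risk_argmin Rk d !=set0) ->
    1 - alpha <= plausibility Pm h L eps A.

(* "All events are assumed measurable": the events used in the statement. *)
Definition events_measurable (dX dY : measure_display) (X : measurableType dX)
  (Y : measurableType dY) (Th : topologicalType) (R : realType)
  (h : X -> Th -> Y) (L : Y -> Y -> R) (Rk : Th -> R) : Prop :=
  forall (m : nat) (eps : R),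
    measurable [set S : m.-tuple (X * Y)%type | (unif_dev h L Rk S <= eps%:E)%E] /\
    measurable [set S : m.-tuple (X * Y)%type | emp_argmin h L S eps !=set0] /\
    (forall A : set Th, Borel A ->
      measurable [set S : m.-tuple (X * Y)%type |
                   emp_argmin h L S eps `&` A !=set0 /\ emp_argmin h L S eps !=set0]).

(* Main.v *)
Require Import Defs.
From mathcomp Require Import all_boot all_order all_algebra.
From mathcomp Require Import all_classical all_reals all_analysis.
From mathcomp Require Import ring lra.
Import Order.TTheory GRing.Theory Num.Theory.
Local Open Scope classical_set_scope.
Local Open Scope ring_scope.

Lemma inf_lb (R : realType) (S : set (\bar R)) x : S x -> (ereal_inf S <= x)%E.
Proof. by move=> Sx; apply: ge_ereal_inf; exists x. Qed.

Lemma in_argmin (X Y Th : Type) (R : realType) (m : nat)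
  (h : X -> Th -> Y) (L : Y -> Y -> R) (Rk : Th -> R) (S : m.-tuple (X * Y))
  (th : Th) (e d eps : R) :
  (forall t, Rk th <= Rk t + d) -> (unif_dev h L Rk S <= e%:E)%E ->
  2 * e + d <= eps -> emp_argmin h L S eps th.
Proof.
move=> Hth Hdev Hed.
have Hb : forall t, `|Rk t - emp_risk h L S t| <= e.
  move=> t; rewrite -lee_fin; apply: le_trans Hdev.
  by apply: le_ereal_sup_tmp; exists (`|Rk t - emp_risk h L S t|)%:E => //; exists t.
rewrite /emp_argmin /=.
have -> : emp_risk h L S th = (emp_risk h L S th - eps) + eps by rewrite subrK.
rewrite EFinD leeD2r //; apply/ereal_infP => _ [t _ <-]; rewrite lee_fin.
have := Hb th; have := Hb t; have := Hth t.
rewrite !ler_norml => ? /andP[? ?] /andP[? ?]; lra.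
Qed.

Lemma plaus_bound (d : measure_display) (T : measurableType d) (R : realType)
  (Pm : probability T R) (G E N : set T) (alpha : R) :
  measurable G -> measurable E -> measurable N -> G `<=` E ->
  1 - alpha <= Pr Pm G -> 0 < Pr Pm N -> 1 - alpha <= Pr Pm E / Pr Pm N.
Proof.
move=> mG mE mN GE HG HN.
have fin : forall A, measurable A -> Pm A \is a fin_num.
  by move=> A mA; apply: fin_num_measure.
have HGE : Pr Pm G <= Pr Pm E.
  by apply: fine_le; rewrite ?fin //; apply: le_measure; rewrite ?inE.
have HE0 : 0 <= Pr Pm E by apply: fine_ge0; apply: measure_ge0.
have HN1 : Pr Pm N <= 1.
  have : (fine (Pm N) <= fine (1 : \bar R)%E) by apply: fine_le; rewrite ?fin //; exact: probability_le1.
  by [].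
set q := Pr Pm E / Pr Pm N.
have Hq0 : 0 <= q by rewrite /q divr_ge0 // ltW.
have HEq : Pr Pm E = q * Pr Pm N by rewrite /q divfK // gt_eqF.
nra.
Qed.

Lemma witness_bound (dX dY : measure_display) (X : measurableType dX)
  (Y : measurableType dY) (Th : Type) (R : realType)
  (P : forall m : nat, probability (m.-tuple (X * Y)%type) R)
  (h : X -> Th -> Y) (L : Y -> Y -> R) (Rk : Th -> R) (e alpha : R) (m : nat) :
  (uc_function P h L Rk e alpha < (m%:R + 1)%:E)%E ->
  exists w, uc_witness P h L Rk w /\ w e alpha <= m%:R.
Proof.
case/ereal_inf_lt => _ [w hw <-]; rewrite lte_fin => hlt.
exists w; split => //.
have : Num.ceil (w e alpha) < (m%:Z + 1).
  rewrite -(ltr_int R); apply: lt_le_trans hlt _.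
  by rewrite intrD.
rewrite ltzD1 ceil_le_int => /le_trans; apply.
by [].
Qed.

Theorem mainTheorem4
  (dX dY : measure_display) (X : measurableType dX) (Y : measurableType dY)
  (Th : topologicalType) (R : realType)
  (D : probability (X * Y)%type R)
  (P : forall m : nat, probability (m.-tuple (X * Y)%type) R)
  (h : X -> Th -> Y) (L : Y -> Y -> R)
  (hP : forall m : nat, is_product_prob D (P m))
  (hint : forall th : Th, D.-integrable setT (fun z => (lossAt h L th z)%:E))
  (hmeas : events_measurable h L (risk D h L))
  (huc : uniform_convergence P h L (risk D h L))
  (eps alpha : R) (heps : 0 < eps) (halpha : 0 < alpha) :
  ((exists th0 : Th, forall th : Th, risk D h L th0 <= risk D h L th) ->
     forall m : nat, (0 < m)%N ->
     (uc_function P h L (risk D h L) (eps / 2) alpha <= (m%:R)%:E)%E ->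
     0 < Pr (P m) [set S | emp_argmin h L S eps !=set0] ->
     valid (P m) h L (risk D h L) alpha eps)
  /\
  (~ (exists th0 : Th, forall th : Th, risk D h L th0 <= risk D h L th) ->
     forall m : nat, (0 < m)%N ->
     (ereal_inf [set uc_function P h L (risk D h L) ((eps - d) / 2) alpha
                | d in [set d : R | (0 < d < eps)%R] ] <= (m%:R)%:E)%E ->
     0 < Pr (P m) [set S | emp_argmin h L S eps !=set0] ->
     valid (P m) h L (risk D h L) alpha eps).
Proof.
set Rk := risk D h L.
have ltm1 : forall (m : nat) (x : \bar R), (x <= (m%:R)%:E)%E -> (x < (m%:R + 1)%:E)%E.
  by move=> m x hx; apply: le_lt_trans hx _; rewrite lte_fin ltrDl.
split.
- move=> [th0 Hmin] m m0 Hf HN A HA [d [d0 [sub ne]]].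
  have [w [hw hwm]] := @witness_bound _ _ X Y Th R P h L Rk _ _ _ (ltm1 _ _ Hf).
  have he : 0 < eps / 2 by rewrite divr_gt0.
  have HG := hw _ _ he halpha m m0 hwm.
  have [mG [mN mE]] := hmeas m (eps / 2).
  have [_ [mN' mE']] := hmeas m eps.
  apply: (@plaus_bound _ _ _ (P m) _ _ _ alpha mG (mE' A HA) mN' _ HG HN).
  move=> S /= HS.
  have Harg : emp_argmin h L S eps th0.
    apply: (@in_argmin _ _ _ _ _ h L Rk S th0 (eps/2) 0 eps _ HS).
    + by move=> t; rewrite addr0.
    + by rewrite addr0 mulrC divfK ?pnatr_eq0.
  have HA0 : A th0.
    apply: sub; rewrite /risk_argmin /=.
    have -> : ereal_inf (range (fun t => (Rk t)%:E)) = (Rk th0)%:E.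
      apply/eqP; rewrite eq_le; apply/andP; split.
        by apply: inf_lb; exists th0.
      by apply/ereal_infP => _ [t _ <-]; rewrite lee_fin.
    by rewrite -EFinD lee_fin lerDl.
  by split; exists th0.
- move=> _ m m0 Hf HN A HA [del [del0 [sub [th1 Hth1]]]].
  have := ltm1 _ _ Hf; case/ereal_inf_lt => _ [d /andP[d0 deps] <-] /(@witness_bound _ _ X Y Th R P h L Rk _ _ _) [w [hw hwm]].
  have he : 0 < (eps - d) / 2 by rewrite divr_gt0 // subr_gt0.
  have HG := hw _ _ he halpha m m0 hwm.
  have [mG _] := hmeas m ((eps - d) / 2).
  have [_ [mN' mE']] := hmeas m eps.
  have [th [Ath Hth]] : exists th, A th /\ forall t, Rk th <= Rk t + d.
    have [Hall|Hnot] := pselect (forall t, Rk th1 <= Rk t + d).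
      by exists th1; split => //; apply: sub.
    have [t1 Ht1] : exists t1, ~ (Rk th1 <= Rk t1 + d).
      by apply/existsNP => H; apply: Hnot.
    have Ht1' : Rk t1 + d < Rk th1 by rewrite ltNge; apply/negP.
    have Hinf1 : (ereal_inf (range (fun t => (Rk t)%:E)) <= (Rk t1)%:E)%E.
      by apply: inf_lb; exists t1.
    have Hlb : forall t, (ereal_inf (range (fun t => (Rk t)%:E)) <= (Rk t)%:E)%E.
      by move=> t; apply: inf_lb; exists t.
    move: Hth1 Hinf1 Hlb; rewrite /risk_argmin /=.
    case E : (ereal_inf _) => [r| |] //= Hth1 Hinf1 Hlb.
    rewrite lee_fin in Hinf1.
    rewrite -EFinD lee_fin in Hth1.
    have [t Htd] : exists t, Rk t < r + d.
      apply/not_existsP => H.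
      have : ((r + d)%:E <= ereal_inf (range (fun t => (Rk t)%:E)))%E.
        apply/ereal_infP => _ [t _ <-]; rewrite lee_fin; rewrite leNgt; apply/negP => Hc.
        by apply: (H t).
      rewrite E lee_fin => Hc; lra.
    exists t; split.
      apply: sub; rewrite /risk_argmin /= E -EFinD lee_fin; lra.
    move=> t'; have := Hlb t'; rewrite lee_fin => ?; lra.
  apply: (@plaus_bound _ _ _ (P m) _ _ _ alpha mG (mE' A HA) mN' _ HG HN).
  move=> S /= HS.
  have Harg : emp_argmin h L S eps th.
    apply: (@in_argmin _ _ _ _ _ h L Rk S th ((eps - d)/2) d eps Hth HS).
    by rewrite mulrC divfK ?pnatr_eq0 // subrK.
  by split; exists th.
Qed.
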